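(* If condition $(C_k)$ holds for every $k\in I_n$, then for all $i,j\in I_n$ with $i\ne j$ one has $a_{ii}>a_{ji}$, $a_{jj}>a_{ij}$, and $$\frac{a_{\ell i}(a_{jj}-a_{ij})+a_{\ell j}(a_{ii}-a_{ji})}{a_{ii}a_{jj}-a_{ij}a_{ji}}<1\quad\text{for all }\ell\in I_n\setminus\{i,j\},$$ and moreover $U_i=\max\left\{\frac{a_{jj}-a_{ij}}{a_{ii}a_{jj}-a_{ij}a_{ji}}: j\in I_n\setminus\{i\}\right\}$ for every $i\in I_n$.
   Context: Fix $n\ge 2$ and $I_m=\{1,\dots,m\}$. Consider the Lotka–Volterra system $x_i'=b_ix_i(1-\alpha_ix)$, $i\in I_n$, where $b_i>0$, $\alpha_i=(a_{i1},\dots,a_{in})$ with $a_{ii}>0$ and $a_{ij}\ge 0$, on $\mathbb{R}^n_+$. For $u\le v$ (componentwise), $[u,v]=\{x\in\mathbb{R}^n_+:u\le x\le v\}$. For $J\subset I_n$, $u^J_i=u_i$ for $i\in J$ and $0$ otherwise. $\gamma_i=\{x\in\mathbb{R}^n_+:\alpha_ix=1\}$. Define $U$ componentwise by: $U_i=a_{ii}^{-1}$ if $a_{ii}\le a_{ji}$ or $a_{ij}=0$ for some $j\ne i$; otherwise $U_i=0$ if $a_{ji}<a_{ii}$ and $a_{jk}\le a_{ik}$ for all $j,k\in I_n\setminus\{i\}$; otherwise $U_i=\max\{\frac{a_{kj}-a_{ij}}{a_{ii}a_{kj}-a_{ij}a_{ki}}: j,k\in I_n\setminus\{i\},\ a_{kj}>a_{ij}\}$.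 Condition $(C_k)$: either $\alpha_kU^{I_n\setminus\{k\}}<1$, or every $x\in\gamma_k\cap[0,U^{I_n\setminus\{k\}}]$ satisfies $\alpha_jx>1$ for all $j\in I_n\setminus\{k\}$. *)

(* Defs.v *)
From HB Require Import structures.
From mathcomp Require Import all_boot all_order all_algebra.
Set Implicit Arguments. Unset Strict Implicit. Unset Printing Implicit Defensive.
Import Order.TTheory GRing.Theory Num.Theory.
Local Open Scope ring_scope.

Definition maxs (R : realFieldType) (s : seq R) : R := foldr Num.max (head 0 s) s.

Definition alpha (R : realFieldType) (n : nat) (A : 'M[R]_n) (k : 'I_n)
  (x : 'I_n -> R) : R := \sum_(j < n) A k j * x j.

Definition restr (R : realFieldType) (n : nat) (u : 'I_n -> R) (J : pred 'I_n)
  : 'I_n -> R := fun i => if J i then u i else 0.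

Definition Uvec (R : realFieldType) (n : nat) (A : 'M[R]_n) (i : 'I_n) : R :=
  if [exists j : 'I_n, (j != i) && ((A i i <= A j i) || (A i j == 0))] then (A i i)^-1
  else if [forall j : 'I_n, forall k : 'I_n,
             ((j != i) && (k != i)) ==> ((A j i < A i i) && (A j k <= A i k))] then 0
  else maxs [seq (A p.2 p.1 - A i p.1) / (A i i * A p.2 p.1 - A i p.1 * A p.2 i)
            | p <- enum [pred p : 'I_n * 'I_n |
                          [&& p.1 != i, p.2 != i & A i p.1 < A p.2 p.1]]].

Definition condC (R : realFieldType) (n : nat) (A : 'M[R]_n) (k : 'I_n) : Prop :=
  let V := restr (Uvec A) (fun i => i != k) in
  alpha A k V < 1 \/
  (forall x : 'I_n -> R, (forall i, 0 <= x i) -> alpha A k x = 1 ->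
     (forall i, x i <= V i) -> forall j, j != k -> 1 < alpha A j x).

(* Main.v *)
Require Import Defs.
From HB Require Import structures.
From mathcomp Require Import all_boot all_order all_algebra.
From Stdlib Require Import Ring.
Import Order.TTheory GRing.Theory Num.Theory.
Local Open Scope ring_scope.

Section RS.
Variable R : comNzRingType.
Definition ad_ (x y : R) : R := x + y.
Definition mu_ (x y : R) : R := x * y.
Definition sb_ (x y : R) : R := x - y.
Definition op_ (x : R) : R := - x.
Definition z0_ : R := 0.
Definition o1_ : R := 1.
Lemma RT_ : @ring_theory R z0_ o1_ ad_ mu_ sb_ op_ eq.
Proof.
constructor; rewrite /ad_ /mu_ /sb_ /op_ /z0_ /o1_ => //.
- exact: add0r. - exact: addrC. - exact: addrA. - exact: mul1r. - exact: mulrC.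
- exact: mulrA. - exact: mulrDl. - move=> x; exact: subrr.
Qed.
Add Ring RRing_ : RT_.
Lemma idt' (a b c d p q : R) : sb_ (mu_ (sb_ d b) (sb_ (mu_ a q) (mu_ b p))) (mu_ (sb_ q b) (sb_ (mu_ a d) (mu_ b c))) = mu_ b (sb_ (sb_ (mu_ a d) (mu_ b c)) (ad_ (mu_ p (sb_ d b)) (mu_ q (sb_ a c)))).
Proof. ring. Qed.
Lemma idt (a b c d p q : R) : ((d-b)*(a*q-b * p) - (q-b)*(a*d-b*c) = b*((a*d-b*c) - (p*(d-b) + q*(a-c)))).
Proof. exact: idt'. Qed.
Lemma idt2' (a b c d : R) : ad_ (mu_ a (sb_ d b)) (mu_ b (sb_ a c)) = sb_ (mu_ a d) (mu_ b c).
Proof. ring. Qed.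
Lemma idt2 (a b c d : R) : a * (d - b) + b * (a - c) = a * d - b * c.
Proof. exact: idt2'. Qed.
End RS.

Lemma foldmax_ge (R : realFieldType) (d : R) s y : y \in s -> y <= foldr Num.max d s.
Proof.
elim: s => //= x s IH; rewrite in_cons => /orP[/eqP->|/IH h]; rewrite le_max ?lexx //.
by rewrite h orbT.
Qed.

Lemma foldmax_in (R : realFieldType) (d : R) s : foldr Num.max d s \in d :: s.
Proof.
elim: s => [|x s IH] /=; first by rewrite mem_seq1.
rewrite maxEle; case: ifP => _.
  by move: IH; rewrite !in_cons => /orP[->|->]; rewrite ?orbT.
by rewrite !in_cons eqxx orbT.
Qed.

Lemma maxs_ge (R : realFieldType) (s : seq R) y : y \in s -> y <= maxs s.
Proof. exact: foldmax_ge. Qed.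

Lemma maxs_in (R : realFieldType) (s : seq R) : s != [::] -> maxs s \in s.
Proof.
case: s => // x s _; have := @foldmax_in _ x (x :: s); rewrite /maxs /=.
by rewrite in_cons => /orP[/eqP->|//]; rewrite mem_head.
Qed.

Lemma maxs_ge0 (R : realFieldType) (s : seq R) :
  (forall y, y \in s -> 0 <= y) -> 0 <= maxs s.
Proof.
case: s => [|x s] h; first by rewrite /maxs.
apply: (le_trans (h x (mem_head _ _))); exact: maxs_ge (mem_head _ _).
Qed.

Lemma pos2 (R : realFieldType) (a b p q : R) :
  0 < a -> 0 <= b -> p <= a -> b < q -> 0 < a * q - b * p.
Proof.
move=> ha hb hp hq; rewrite subr_gt0.
apply: (le_lt_trans (ler_wpM2l hb hp)).
by rewrite [a * q]mulrC ltr_pM2r.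
Qed.

Lemma rho_le (R : realFieldType) (a b c d p q : R) :
  0 <= b -> 0 < a * d - b * c -> 0 < a * q - b * p ->
  (p * (d - b) + q * (a - c)) / (a * d - b * c) < 1 ->
  (q - b) / (a * q - b * p) <= (d - b) / (a * d - b * c).
Proof.
move=> hb hD hD' H; rewrite ltr_pdivrMr // mul1r in H.
rewrite ler_pdivrMr // mulrAC ler_pdivlMr // -subr_ge0.
have -> : (d - b) * (a * q - b * p) - (q - b) * (a * d - b * c) =
  b * ((a * d - b * c) - (p * (d - b) + q * (a - c))) by exact: idt.
by apply: mulr_ge0 => //; rewrite subr_ge0 ltW.
Qed.

Lemma alpha_mono (R : realFieldType) n (A : 'M[R]_n) k (x y : 'I_n -> R) :
  (forall m, 0 <= A k m) -> (forall m, x m <= y m) -> alpha A k x <= alpha A k y.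
Proof.
move=> hA hxy; rewrite /alpha; apply: ler_sum => m _; exact: ler_wpM2l.
Qed.

Lemma alpha_scale (R : realFieldType) n (A : 'M[R]_n) k (c : R) (x : 'I_n -> R) :
  alpha A k (fun m => c * x m) = c * alpha A k x.
Proof.
rewrite /alpha mulr_sumr; apply: eq_bigr => m _; exact: mulrCA.
Qed.

Lemma alpha_term (R : realFieldType) n (A : 'M[R]_n) k i (x : 'I_n -> R) :
  (forall m, 0 <= A k m * x m) -> A k i * x i <= alpha A k x.
Proof.
move=> h; rewrite /alpha (bigD1 i) //= lerDl; apply: sumr_ge0 => m _; exact: h.
Qed.

Lemma alpha1 (R : realFieldType) n (A : 'M[R]_n) k i (x : 'I_n -> R) :
  (forall m, m != i -> x m = 0) -> alpha A k x = A k i * x i.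
Proof.
move=> h; rewrite /alpha (bigD1 i) //= big1 ?addr0 // => m hm.
by rewrite h ?mulr0.
Qed.

Lemma alpha2 (R : realFieldType) n (A : 'M[R]_n) k i j (x : 'I_n -> R) :
  i != j -> (forall m, m != i -> m != j -> x m = 0) ->
  alpha A k x = A k i * x i + A k j * x j.
Proof.
move=> hij h; rewrite /alpha (bigD1 i) //= (bigD1 j) /=; last by rewrite eq_sym hij.
rewrite big1 ?addr0 // => m /andP[hmi hmj].
by rewrite h ?mulr0.
Qed.

Lemma Uvec_ge0 (R : realFieldType) n (A : 'M[R]_n) i :
  (forall i, 0 < A i i) -> (forall i j, 0 <= A i j) -> 0 <= Uvec A i.
Proof.
move=> hdiag hoff; rewrite /Uvec; case: ifP => hn1.
  by rewrite invr_ge0 ltW.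
case: ifP => // _; apply: maxs_ge0 => y /mapP[p]; rewrite mem_enum /=.
move=> /and3P[h1 h2 h3] ->.
have := negbT hn1; rewrite negb_exists => /forallP /(_ p.2).
rewrite h2 /= negb_or -ltNge => /andP[hlt _].
apply: divr_ge0; first by rewrite subr_ge0 ltW.
apply: ltW; apply: pos2 => //; exact: ltW.
Qed.

Theorem mainTheorem8 (R : realFieldType) (n : nat) (A : 'M[R]_n)
  (hn : (2 <= n)%N)
  (hdiag : forall i, 0 < A i i) (hoff : forall i j, 0 <= A i j)
  (hC : forall k, condC A k) :
  (forall i j : 'I_n, i != j ->
     [/\ A j i < A i i, A i j < A j j &
         forall l : 'I_n, l != i -> l != j ->
           (A l i * (A j j - A i j) + A l j * (A i i - A j i))
             / (A i i * A j j - A i j * A j i) < 1]) /\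
  (forall i : 'I_n,
     Uvec A i = maxs [seq (A j j - A i j) / (A i i * A j j - A i j * A j i)
                     | j <- enum [pred j : 'I_n | j != i]]).
Proof.
have U0 : forall i, 0 <= Uvec A i by move=> i; exact: Uvec_ge0.
have V0 : forall k m, 0 <= restr (Uvec A) (fun i => i != k) m.
  by move=> k m; rewrite /restr; case: ifP.
have h1 : forall i j, i != j -> A j i < A i i.
  move=> i j hij; rewrite ltNge; apply/negP => hle.
  have hji : 0 < A j i by exact: lt_le_trans (hdiag i) hle.
  have Ui : Uvec A i = (A i i)^-1.
    rewrite /Uvec ifT //; apply/existsP; exists j.
    by rewrite eq_sym hij hle.
  have Vi : restr (Uvec A) (fun i => i != j) i = (A i i)^-1 by rewrite /restr hij.
  case: (hC j) => /=.
  - move=> hlt.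
    have H := @alpha_term _ _ A j i (restr (Uvec A) (fun i => i != j))
      (fun m => mulr_ge0 (hoff _ _) (V0 _ _)).
    rewrite Vi in H.
    have H1 : 1 <= A j i * (A i i)^-1 by rewrite ler_pdivlMr // mul1r.
    by have := le_lt_trans (le_trans H1 H) hlt; rewrite ltxx.
  - move=> H.
    pose x := fun m : 'I_n => if m == i then (A j i)^-1 else 0.
    have hx1 : forall m, m != i -> x m = 0 by move=> m hm; rewrite /x (negbTE hm).
    have hxi : x i = (A j i)^-1 by rewrite /x eqxx.
    have hlt : 1 < alpha A i x.
      apply: (H x _ _ _ i hij).
    - by move=> m; rewrite /x; case: ifP => // _; rewrite invr_ge0 ltW.
    - by rewrite (@alpha1 _ _ A _ _ _ hx1) hxi mulfV // lt0r_neq0.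
    - move=> m; case: (eqVneq m i) => [->|hm].
        by rewrite hxi Vi lef_pV2 // posrE.
      by rewrite hx1.
    by move: hlt; rewrite (@alpha1 _ _ A _ _ _ hx1) hxi ltr_pdivlMr // mul1r ltNge hle.
have h2 : forall i j, i != j -> A i j < A j j.
  by move=> i j hij; apply: h1; rewrite eq_sym.
pose r := fun i j : 'I_n => (A j j - A i j) / (A i i * A j j - A i j * A j i).
have hD : forall i j, i != j -> 0 < A i i * A j j - A i j * A j i.
  by move=> i j hij; apply: pos2; [exact: hdiag | exact: hoff | exact: ltW (h1 _ _ hij) | exact: h2].
have hr0 : forall i j, i != j -> 0 <= r i j.
  by move=> i j hij; apply: divr_ge0; [rewrite subr_ge0 ltW // h2 | apply: ltW; apply: hD].
have hrle : forall i j, i != j -> r i j <= (A i i)^-1.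
  move=> i j hij; rewrite /r ler_pdivrMr ?hD // ler_pdivlMl //.
  rewrite mulrBr lerD2l lerN2 [A i i * A i j]mulrC ler_wpM2l // ltW //.
  exact: h1.
have hreq : forall i j, A i j = 0 -> r i j = (A i i)^-1.
  move=> i j h0; rewrite /r h0 subr0 mul0r subr0 invfM mulrCA mulfV ?mulr1 //.
  exact: lt0r_neq0.
have hUr : forall i j, i != j -> r i j <= Uvec A i.
  move=> i j hij; have hji : j != i by rewrite eq_sym.
  rewrite /Uvec; case: ifP => [_|hn1]; first exact: hrle.
  case: ifP => [hall|hn2].
    move/forallP: hall => /(_ j) /forallP /(_ j).
    move/implyP => H; move: (H (andb_true_intro (conj hji hji))) => /andP[_].
    by rewrite leNgt h2.
  apply: maxs_ge; apply/mapP; exists (j, j) => //.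
  by rewrite mem_enum; apply/and3P; split; [exact: hji | exact: hji | exact: h2].
have hl : forall i j : 'I_n, i != j -> forall l : 'I_n, l != i -> l != j ->
           (A l i * (A j j - A i j) + A l j * (A i i - A j i))
             / (A i i * A j j - A i j * A j i) < 1.
  move=> i j hij l hli hlj.
  have hji : j != i by rewrite eq_sym.
  pose E := fun m : 'I_n => if m == i then r i j else if m == j then r j i else 0.
  have hE0 : forall m, m != i -> m != j -> E m = 0.
    by move=> m hmi hmj; rewrite /E (negbTE hmi) (negbTE hmj).
  have hEi : E i = r i j by rewrite /E eqxx.
  have hEj : E j = r j i by rewrite /E (negbTE hji) eqxx.
  have hDs : A j j * A i i - A j i * A i j = A i i * A j j - A i j * A j i.
    by rewrite mulrC [A j i * _]mulrC.
  have hEm : forall m, 0 <= E m.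
    move=> m; rewrite /E; case: ifP => _; first exact: hr0 hij.
    by case: ifP => _ //; exact: hr0 hji.
  have aE : forall m, alpha A m E = (A m i * (A j j - A i j) + A m j * (A i i - A j i))
             / (A i i * A j j - A i j * A j i).
    move=> m; rewrite (@alpha2 _ _ A m i j E hij hE0) hEi hEj /r hDs.
    by rewrite [RHS]mulrDl !mulrA.
  have aEi : alpha A i E = 1.
    by rewrite aE idt2 mulfV // lt0r_neq0 // hD.
  rewrite -aE ltNge; apply/negP => hQ.
  have hQ0 : 0 < alpha A l E by exact: lt_le_trans ltr01 hQ.
  have hEV : forall m, E m <= restr (Uvec A) (fun i => i != l) m.
    move=> m; rewrite /restr; case: (eqVneq m i) => [->|hmi].
      by rewrite eq_sym hli hEi; apply: hUr.
    case: (eqVneq m j) => [->|hmj].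
      by rewrite eq_sym hlj hEj; apply: hUr.
    by rewrite hE0 //; case: ifP.
  case: (hC l) => /=.
  - move=> hlt; have := le_lt_trans (@alpha_mono _ _ A l _ _ (hoff l) hEV) hlt.
    by rewrite ltNge hQ.
  - move=> H.
    pose x := fun m => (alpha A l E)^-1 * E m.
    have hlt : 1 < alpha A i x.
      apply: (H x _ _ _ i); last by rewrite eq_sym.
      + by move=> m; rewrite /x mulr_ge0 // invr_ge0 ltW.
      + by rewrite /x alpha_scale mulVf // lt0r_neq0.
      + move=> m; apply: le_trans (hEV m); rewrite /x ler_piMl //.
        by rewrite invf_le1.
    move: hlt; rewrite /x alpha_scale aEi mulr1 ltNge.
    by rewrite invf_le1 // hQ.
split.
  by move=> i j hij; split; [exact: h1 | exact: h2 | exact: hl].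
move=> i.
have [j0 hj0] : exists j0 : 'I_n, j0 != i.
  have h0 : (0 < n)%N by apply: leq_trans hn.
  case: (eqVneq i (Ordinal h0)) => [->|hne].
    by exists (Ordinal hn).
  by exists (Ordinal h0); rewrite eq_sym.
set s2 := [seq _ | j <- _].
have T_ge : forall j, j != i -> r i j <= maxs s2.
  move=> j hji; apply: maxs_ge; apply/mapP; exists j => //.
  by rewrite mem_enum.
have [j1 hj1 hT] : exists2 j1, j1 != i & maxs s2 = r i j1.
  have : maxs s2 \in s2.
    apply: maxs_in; apply/eqP => /(congr1 size); rewrite size_map.
    move/eqP; rewrite -cardE; apply/negP; rewrite -lt0n; apply/card_gt0P.
    by exists j0.
  by move/mapP => [j]; rewrite mem_enum => hj ->; exists j.
have hij1 : i != j1 by rewrite eq_sym.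
apply/eqP; rewrite eq_le; apply/andP; split; last first.
  by rewrite hT; exact: hUr.
rewrite /Uvec; case: ifP => [/existsP [j /andP [hji hor]]|hn1].
  have hij : i != j by rewrite eq_sym.
  move: hor; rewrite leNgt (h1 _ _ hij) /= => /eqP h0.
  by rewrite -(hreq i j h0) T_ge.
case: ifP => [hall|hn2].
  have hji := hj0.
  move/forallP: hall => /(_ j0) /forallP /(_ j0).
  move/implyP => H; move: (H (andb_true_intro (conj hji hji))) => /andP[_].
  by rewrite leNgt h2 // eq_sym.
set s1 := [seq _ | p <- _].
have : maxs s1 \in s1.
  apply: maxs_in; apply/eqP => /(congr1 size); rewrite size_map.
  move/eqP; rewrite -cardE; apply/negP; rewrite -lt0n; apply/card_gt0P.
  exists (j0, j0); rewrite /in_mem /=; apply/and3P; split; [exact: hj0 | exact: hj0 |].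
  by apply: h2; rewrite eq_sym.
move/mapP => [[j k]]; rewrite mem_enum /= => /and3P [hj hk hq] ->.
have hij : i != j by rewrite eq_sym.
have hik : i != k by rewrite eq_sym.
case: (eqVneq k j) => [->|hkj]; first exact: T_ge.
apply: le_trans (T_ge j hj).
apply: rho_le; first exact: hoff.
- exact: hD.
- by apply: pos2 => //; apply: ltW; apply: h1.
- by apply: hl.
Qed.
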